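(* For propositional formulae $S_1,S_2$, the lexicographic orders $[S_1,S_2]$ and $[S_1]$ are equivalent if and only if at least one of the following holds: (1) $S_2$ is inconsistent; (2) $S_2$ is tautological; (3) $S_2$ is equivalent to $S_1$; (4) $S_2$ is equivalent to $\neg S_1$.
   Context: Models are truth assignments. For a formula $F$: $I \leq_F J$ iff $I \models F$ or $J \not\models F$. For a sequence $S=[S_1,\ldots,S_m]$: $I \leq_S J$ iff either $S=[]$, or ($I \leq_{S_1} J$ and (either $J \not\leq_{S_1} I$ or $I \leq_R J$)), where $R=[S_2,\ldots,S_m]$. Two sequences $S$ and $R$ are equivalent if $I \leq_S J$ and $I\leq_R J$ coincide for all pairs of models $I,J$. *)

(* Defs.v *)
From Stdlib Require Import List Bool.
Import ListNotations.

Inductive formula : Type :=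
  | FVar : nat -> formula
  | FTrue : formula
  | FFalse : formula
  | FNot : formula -> formula
  | FAnd : formula -> formula -> formula
  | FOr : formula -> formula -> formula
  | FImp : formula -> formula -> formula.

Definition model := nat -> bool.

Fixpoint sat (I : model) (F : formula) : Prop :=
  match F with
  | FVar n => I n = true
  | FTrue => True
  | FFalse => False
  | FNot G => ~ sat I G
  | FAnd G H => sat I G /\ sat I H
  | FOr G H => sat I G \/ sat I H
  | FImp G H => sat I G -> sat I H
  end.

Definition le_form (F : formula) (I J : model) : Prop := sat I F \/ ~ sat J F.

Fixpoint le_seq (S : list formula) (I J : model) : Prop :=
  match S with
  | [] => True
  | S1 :: R => le_form S1 I J /\ (~ le_form S1 J I \/ le_seq R I J)
  end.

Definition seq_equiv (S R : list formula) : Prop :=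
  forall I J : model, le_seq S I J <-> le_seq R I J.

Definition inconsistent (F : formula) : Prop := forall I : model, ~ sat I F.
Definition tautological (F : formula) : Prop := forall I : model, sat I F.
Definition form_equiv (F G : formula) : Prop := forall I : model, sat I F <-> sat I G.

(* Main.v *)
Require Import Defs.
From Stdlib Require Import List Classical.
Import ListNotations.

Lemma key (S1 S2 : formula) :
  seq_equiv [S1; S2] [S1] <->
  (forall I J, (sat I S1 <-> sat J S1) -> sat J S2 -> sat I S2).
Proof.
  unfold seq_equiv; simpl; unfold le_form; split.
  - intros H I J E HJ. destruct (classic (sat I S2)) as [|n]; auto.
    exfalso. destruct (H I J) as [_ H2].
    destruct (classic (sat I S1)) as [a|a].
    + destruct (H2 (conj (or_introl a) (or_intror Logic.I))) as [_ [h|[[h|h] _]]]; tauto.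
    + assert (~ sat J S1) by tauto.
      destruct (H2 (conj (or_intror H0) (or_intror Logic.I))) as [_ [h|[[h|h] _]]]; tauto.
  - intros H I J. split.
    + intros [h _]. tauto.
    + intros [h _]. split; auto.
      destruct (classic (sat I S1)); destruct (classic (sat J S1)); try tauto;
      (right; split; [|right; exact Logic.I];
      destruct (classic (sat J S2)) as [d|d]; [left|right]; auto;
      apply (H I J); tauto).
Qed.

Theorem theorem4 (S1 S2 : formula) :
  seq_equiv [S1; S2] [S1] <->
  (inconsistent S2 \/ tautological S2 \/ form_equiv S2 S1 \/ form_equiv S2 (FNot S1)).
Proof.
  rewrite key. split.
  - intros H.
    destruct (classic (inconsistent S2)) as [|n1]; [tauto|].
    destruct (classic (tautological S2)) as [|n2]; [tauto|].
    destruct (classic (form_equiv S2 S1)) as [|n3]; [tauto|].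
    destruct (classic (form_equiv S2 (FNot S1))) as [|n4]; [tauto|].
    exfalso.
    unfold inconsistent, tautological, form_equiv in *.
    apply not_all_ex_not in n1 as [J0 j0]. apply NNPP in j0.
    apply not_all_ex_not in n2 as [I0 i0].
    apply not_all_ex_not in n3 as [K k].
    apply not_all_ex_not in n4 as [L l]. simpl in l.
    destruct (classic (sat I0 S1)) as [a|a];
    destruct (classic (sat J0 S1)) as [b|b].
    + apply i0, (H I0 J0); tauto.
    + destruct (classic (sat L S1)) as [c|c].
      * apply i0, (H I0 L); tauto.
      * assert (sat L S2) by (apply (H L J0); tauto); tauto.
    + destruct (classic (sat K S1)) as [c|c].
      * assert (sat K S2) by (apply (H K J0); tauto); tauto.
      * apply i0, (H I0 K); tauto.
    + apply i0, (H I0 J0); tauto.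
  - intros [h|[h|[h|h]]] I J E HJ; unfold inconsistent, tautological, form_equiv in h.
    + exfalso; exact (h J HJ).
    + apply h.
    + apply h, E, h, HJ.
    + apply h. apply h in HJ. simpl in *. tauto.
Qed.
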